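(* There exists a non-adaptive algorithm with one-sided error that, given a proximity parameter $0<\epsilon<1$, query access to a function $f\colon[n]\to\mathbb{R}$ (where $[n]=\{0,\dots,n-1\}$) and sample access to an unknown probability distribution $\mathcal{D}$ on $[n]$, accepts with probability $1$ if $f$ is convex and rejects with probability at least $2/3$ if $f$ is $\epsilon$-far from convex with respect to $\mathcal{D}$, using $O\!\left(\frac{\log n}{\epsilon}\right)$ queries to $f$ and $O\!\left(\frac1\epsilon\right)$ samples from $\mathcal{D}$.
   Context: A function $f\colon X\to\mathbb{R}$ on a finite set $X\subseteq\mathbb{R}^d$ is convex if for every finite collection $x_1,\dots,x_k\in X$ and reals $\lambda_i\ge0$ with $\sum_i\lambda_i=1$ and $\sum_i\lambda_ix_i\in X$, one has $f(\sum_i\lambda_ix_i)\le\sum_i\lambda_if(x_i)$. For a distribution $\mathcal{D}$ on $X$, a function $g$ is $\epsilon$-far from convex with respect to $\mathcal{D}$ if $\Pr_{x\sim\mathcal{D}}[g(x)\ne h(x)]\ge\epsilon$ for every convex $h\colon X\to\mathbb{R}$. Non-adaptive means all queries are chosen before any function value is observed. *)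

(* Defs.v *)
From HB Require Import structures.
From mathcomp Require Import all_boot all_order all_algebra.
From mathcomp Require Import reals.
Set Implicit Arguments. Unset Strict Implicit. Unset Printing Implicit Defensive.
Import Order.TTheory GRing.Theory Num.Theory.
Local Open Scope ring_scope.

Definition convex_on_range (R : realType) (n : nat) (f : 'I_n -> R) : Prop :=
  forall (k : nat) (x : 'I_k -> 'I_n) (lam : 'I_k -> R) (y : 'I_n),
    (forall i, 0 <= lam i) ->
    \sum_(i < k) lam i = 1 ->
    (nat_of_ord y)%:R = \sum_(i < k) lam i * (nat_of_ord (x i))%:R ->
    f y <= \sum_(i < k) lam i * f (x i).

Definition is_distr (R : realType) (n : nat) (D : 'I_n -> R) : Prop :=
  (forall x, 0 <= D x) /\ \sum_(x < n) D x = 1.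

Definition far_from_convex (R : realType) (n : nat) (D : 'I_n -> R)
    (eps : R) (g : 'I_n -> R) : Prop :=
  forall h : 'I_n -> R, convex_on_range h ->
    eps <= \sum_(x < n | g x != h x) D x.

(* A non-adaptive randomized tester with sample access on domain [n]:
   it flips internal coins w (drawn from a finite probability space with
   weights coin_prob), draws sample_num i.i.d. samples xs from D, then
   chooses the list of query points (queries w xs), depending only on the
   coins and the samples (non-adaptivity: before seeing any value of f),
   and finally decides (true = accept) from the coins, the samples and the
   list of values of f on the query points. *)
Record tester (R : realType) (n : nat) := Tester {
  coins : finType;
  coin_prob : coins -> R;
  sample_num : nat;
  queries : coins -> sample_num.-tuple 'I_n -> seq 'I_n;
  decide : coins -> sample_num.-tuple 'I_n -> seq R -> bool
}.
Arguments coins {R n} _.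
Arguments coin_prob {R n} _ _.
Arguments sample_num {R n} _.
Arguments queries {R n} _ _ _.
Arguments decide {R n} _ _ _ _.

Definition valid_coins (R : realType) (n : nat) (T : tester R n) : Prop :=
  (forall w, 0 <= coin_prob T w) /\ \sum_(w : coins T) coin_prob T w = 1.

Definition accept_prob (R : realType) (n : nat) (T : tester R n)
    (D : 'I_n -> R) (f : 'I_n -> R) : R :=
  \sum_(w : coins T) coin_prob T w *
    \sum_(xs : (sample_num T).-tuple 'I_n)
      (\prod_(i < sample_num T) D (tnth xs i)) *
      (decide T w xs (map f (queries T w xs)))%:R.

(* Main.v *)
Require Import Defs.
From HB Require Import structures.
From mathcomp Require Import all_boot all_order all_algebra.
From mathcomp Require Import reals.
From mathcomp Require Import lra zify ring.
Set Implicit Arguments. Unset Strict Implicit. Unset Printing Implicit Defensive.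
Import Order.TTheory GRing.Theory Num.Theory.

Section Slopes.
Variable R : realType.
Local Open Scope ring_scope.
Implicit Types p q r u v w : R.

Definition sl p u q v : R := (v - u) / (q - p).
Definition cv p u q v r w : bool := (v - u) * (r - q) <= (w - v) * (q - p).

Lemma sl_split p u q v r w : p < q -> q < r ->
  sl p u r w * ((q - p) + (r - q)) = sl p u q v * (q - p) + sl q v r w * (r - q).
Proof.
move=> pq qr; rewrite /sl.
have h1 : q - p != 0 by rewrite subr_eq0 gt_eqF.
have h2 : r - q != 0 by rewrite subr_eq0 gt_eqF.
have h3 : r - p != 0 by rewrite subr_eq0 gt_eqF // (lt_trans pq qr).
have -> : (q - p) + (r - q) = r - p by ring.
rewrite !divfK //; ring.
Qed.

Lemma slA p u q v r w : p < q -> q < r ->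
  sl p u q v <= sl q v r w -> sl p u q v <= sl p u r w.
Proof.
move=> pq qr h; have := sl_split u v w pq qr.
have : 0 < q - p by rewrite subr_gt0. have : 0 < r - q by rewrite subr_gt0.
move=> *; nra.
Qed.

Lemma slB p u q v r w : p < q -> q < r ->
  sl p u q v <= sl q v r w -> sl p u r w <= sl q v r w.
Proof.
move=> pq qr h; have := sl_split u v w pq qr.
have : 0 < q - p by rewrite subr_gt0. have : 0 < r - q by rewrite subr_gt0.
move=> *; nra.
Qed.

Lemma slC p u q v r w : p < q -> q < r ->
  sl p u q v <= sl p u r w -> sl p u q v <= sl q v r w.
Proof.
move=> pq qr h; have := sl_split u v w pq qr.
have : 0 < q - p by rewrite subr_gt0. have : 0 < r - q by rewrite subr_gt0.
move=> *; nra.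
Qed.

Lemma slD p u q v r w : p < q -> q < r ->
  sl p u r w <= sl q v r w -> sl p u q v <= sl q v r w.
Proof.
move=> pq qr h; have := sl_split u v w pq qr.
have : 0 < q - p by rewrite subr_gt0. have : 0 < r - q by rewrite subr_gt0.
move=> *; nra.
Qed.

Lemma cvE p u q v r w : p < q -> q < r ->
  cv p u q v r w = (sl p u q v <= sl q v r w).
Proof.
move=> pq qr; rewrite /cv /sl.
have h1 : 0 < q - p by rewrite subr_gt0.
have h2 : 0 < r - q by rewrite subr_gt0.
rewrite ler_pdivlMr // mulrAC ler_pdivrMr //.
Qed.

Lemma bern (e : R) (m : nat) : 0 <= e -> e <= 1 ->
  (1 - e) ^+ m * (1 + m%:R * e) <= 1.
Proof.
move=> e0 e1; elim: m => [|m IH]; first by rewrite expr0 mul0r addr0 mul1r.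
rewrite exprSr -mulrA.
have hp : 0 <= (1 - e) ^+ m by apply: exprn_ge0; lra.
apply: le_trans IH; apply: ler_wpM2l => //.
rewrite -natr1. have : 0 <= m%:R :> R by []. move=> *; nra.
Qed.

End Slopes.
Definition lvl (x j : nat) : seq nat :=
  [:: x %/ 2 ^ j * 2 ^ j - 1; x %/ 2 ^ j * 2 ^ j;
      (x %/ 2 ^ j).+1 * 2 ^ j - 1; (x %/ 2 ^ j).+1 * 2 ^ j].

Definition qpts (K x : nat) : seq nat := x :: flatten [seq lvl x j | j <- iota 0 K.+1].

Lemma size_flatten_le (S T : Type) (F : S -> seq T) (s : seq S) c :
  (forall x, size (F x) <= c) -> size (flatten (map F s)) <= size s * c.
Proof.
move=> h; elim: s => [|x s IH] //=.
rewrite size_cat mulSn leq_add //.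
Qed.

Lemma size_qpts K x : size (qpts K x) <= (4 * K + 5).
Proof.
rewrite /qpts -cat1s size_cat.
have := @size_flatten_le _ _ (lvl x) (iota 0 K.+1) 4 (fun _ => leqnn 4).
rewrite size_iota => H. apply: leq_trans (leq_add (leqnn 1) H) _; lia.
Qed.

Lemma qpts_lvl K x j y : j <= K -> y \in lvl x j -> y \in qpts K x.
Proof.
move=> jK hy; rewrite inE; apply/orP; right; apply/flatten_mapP.
by exists j => //; rewrite mem_iota.
Qed.

Lemma qpts_self K x : x \in qpts K x.
Proof. by rewrite inE eqxx. Qed.

Lemma bridge K x y : x < y -> y < 2 ^ K.+1 ->
  exists b, [/\ x < b <= y, b - 1 \in qpts K x, b \in qpts K x,
              b - 1 \in qpts K y & b \in qpts K y].
Proof.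
move=> xy yK.
have xK : x < 2 ^ K.+1 by apply: ltn_trans yK.
have hex : exists j, x %/ 2 ^ j.+1 == y %/ 2 ^ j.+1.
  by exists K; rewrite !divn_small.
case: (ex_minnP hex) => j /eqP ej jmin.
have jK : j <= K by apply: jmin; rewrite !divn_small.
have neq : x %/ 2 ^ j != y %/ 2 ^ j.
  case: j ej jmin jK => [|i] ej jmin jK; first by rewrite !expn0 !divn1 ltn_eqF.
  apply/negP => e; have := jmin i e; lia.
have le : x %/ 2 ^ j <= y %/ 2 ^ j by apply: leq_div2r; exact: ltnW.
have e2 : x %/ 2 ^ j %/ 2 = y %/ 2 ^ j %/ 2 by rewrite -!divnMA -expnSr.
have qq : y %/ 2 ^ j = (x %/ 2 ^ j).+1 by move: neq; lia.
exists (y %/ 2 ^ j * 2 ^ j); split.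
- by rewrite leq_trunc_div andbT qq ltn_ceil // expn_gt0.
- by apply: (qpts_lvl jK); rewrite qq /lvl !inE eqxx ?orbT.
- by apply: (qpts_lvl jK); rewrite qq /lvl !inE eqxx ?orbT.
- by apply: (qpts_lvl jK); rewrite /lvl !inE eqxx ?orbT.
- by apply: (qpts_lvl jK); rewrite /lvl !inE eqxx ?orbT.
Qed.

Local Open Scope ring_scope.

Local Open Scope ring_scope.

Definition allT (T : Type) (P : T -> T -> T -> bool) (s : seq T) : bool :=
  all (fun p => all (fun q => all (fun r => P p q r) s) s) s.

Lemma allTP (T : eqType) (P : T -> T -> T -> bool) s p q r :
  allT P s -> p \in s -> q \in s -> r \in s -> P p q r.
Proof.
move=> /allP h ps qs rs; have /allP h2 := h p ps; have /allP h3 := h2 q qs.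
exact: h3.
Qed.

Section Good.
Variables (R : realType) (n K : nat) (f : 'I_n -> R).
Hypothesis hK : (n <= 2 ^ K.+1)%N.

Definition pos (p : 'I_n) : R := (p : nat)%:R.
Definition s (p q : 'I_n) : R := sl (pos p) (f p) (pos q) (f q).
Definition qlist (x : 'I_n) : seq 'I_n := pmap insub (qpts K x).
Definition ok3 (p q r : 'I_n) : bool :=
  ((p < q < r)%N) ==> cv (pos p) (f p) (pos q) (f q) (pos r) (f r).
Definition good (x : 'I_n) : bool := allT ok3 (qlist x).

Lemma mem_qlist (x p : 'I_n) : (p \in qlist x) = ((p : nat) \in qpts K x).
Proof. by rewrite mem_pmap_sub. Qed.

Lemma self_qlist x : x \in qlist x.
Proof. by rewrite mem_qlist qpts_self. Qed.

Lemma ltpos (p q : 'I_n) : (p < q)%N -> pos p < pos q.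
Proof. by move=> h; rewrite /pos ltr_nat. Qed.

Lemma goodT w p q r : good w -> p \in qlist w -> q \in qlist w -> r \in qlist w ->
  (p < q)%N -> (q < r)%N -> s p q <= s q r.
Proof.
move=> gw pw qw rw pq qr.
have := allTP gw pw qw rw; rewrite /ok3 pq qr /= cvE //; exact: ltpos.
Qed.

Lemma goodX w p q r : good w -> p \in qlist w -> q \in qlist w -> r \in qlist w ->
  (p <= q)%N -> (q < r)%N -> s p r <= s q r.
Proof.
move=> gw pw qw rw; rewrite leq_eqVlt => /orP [/eqP e|pq] qr.
  by have -> : p = q by apply: val_inj.
exact: slB (ltpos pq) (ltpos qr) (goodT gw pw qw rw pq qr).
Qed.

Lemma goodY w p q r : good w -> p \in qlist w -> q \in qlist w -> r \in qlist w ->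
  (p < q)%N -> (q <= r)%N -> s p q <= s p r.
Proof.
move=> gw pw qw rw pq; rewrite leq_eqVlt => /orP [/eqP e|qr].
  by have -> : q = r by apply: val_inj.
exact: slA (ltpos pq) (ltpos qr) (goodT gw pw qw rw pq qr).
Qed.

Lemma bridgeI (x y : 'I_n) : (x < y)%N -> exists a b : 'I_n,
  [/\ (x <= a)%N && (a < b)%N && (b <= y)%N, a \in qlist x, b \in qlist x,
      a \in qlist y & b \in qlist y].
Proof.
move=> xy.
have yK : (y < 2 ^ K.+1)%N by apply: leq_trans hK.
have [b [/andP [xb be] h1 h2 h3 h4]] := bridge xy yK.
have bn : (b < n)%N by apply: leq_ltn_trans be (ltn_ord y).
have an : (b - 1 < n)%N by apply: leq_ltn_trans bn; exact: leq_subr.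
exists (Ordinal an), (Ordinal bn); rewrite !mem_qlist /=; split => //.
apply/andP; split; [apply/andP; split|] => //; lia.
Qed.

Lemma triple (x y z : 'I_n) : good x -> good y -> good z ->
  (x < y)%N -> (y < z)%N -> s x y <= s y z.
Proof.
move=> gx gy gz xy yz.
have [u [uy [ul Lu]]] : exists u, [/\ u \in qlist y, (u < y)%N & s x y <= s u y].
  have [a [b [/andP [/andP [xa ab] bY] ax bx ay bby]]] := bridgeI xy.
  have X1 : s x b <= s a b by apply: goodX gx (self_qlist x) ax bx xa ab.
  move: bY; rewrite leq_eqVlt => /orP [/eqP e|bY].
    have eb : b = y by apply: val_inj.
    exists a; split => //; first by rewrite -eb.
    by rewrite -eb.
  exists b; split => //.
  have X2 : s a b <= s b y by apply: goodT gy ay bby (self_qlist y) ab bY.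
  apply: slB (ltpos (leq_ltn_trans xa ab)) (ltpos bY) (le_trans X1 X2).
have [v [vy [lv Rv]]] : exists v, [/\ v \in qlist y, (y < v)%N & s y v <= s y z].
  have [a [b [/andP [/andP [ya ab] bz] ay bby az bbz]]] := bridgeI yz.
  have Y1 : s a b <= s a z by apply: goodY gz az bbz (self_qlist z) ab bz.
  move: ya; rewrite leq_eqVlt => /orP [/eqP e|ya].
    have ea : y = a by apply: val_inj.
    exists b; split => //; first by rewrite ea.
    by rewrite ea.
  exists a; split => //.
  have Y2 : s y a <= s a b by apply: goodT gy (self_qlist y) ay bby ya ab.
  apply: slA (ltpos ya) (ltpos (leq_trans ab bz)) (le_trans Y2 Y1).
apply: le_trans Lu _; apply: le_trans _ Rv.
exact: goodT gy uy (self_qlist y) vy ul lv.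
Qed.

End Good.

Section Ext.
Variables (R : realType) (n : nat) (f : 'I_n -> R) (G : pred 'I_n).
Hypothesis HG : forall x y z, G x -> G y -> G z -> (x < y)%N -> (y < z)%N ->
  s f x y <= s f y z.

Definition Lmax (g : 'I_n) : R := \big[Order.max/0]_(g' | G g' && (g' < g)%N) s f g' g.
Definition sig (g : 'I_n) : R := \big[Order.min/Lmax g]_(g' | G g' && (g < g')%N) s f g g'.
Definition ell (g : 'I_n) (t : R) : R := f g + sig g * (t - pos R g).

Lemma ell_le g g' : G g -> G g' -> ell g (pos R g') <= f g'.
Proof.
move=> Gg Gg'; rewrite /ell.
case: (ltngtP g g') => [lt|gt|eq].
- have h1 : sig g <= s f g g' by apply: (bigmin_le_cond (Lmax g) (fun i => s f g i)); rewrite Gg' lt.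
  have dp : 0 < pos R g' - pos R g by rewrite subr_gt0 /pos ltr_nat.
  have : s f g g' * (pos R g' - pos R g) = f g' - f g.
    by rewrite /s /sl divfK // gt_eqF.
  move=> E; nra.
- have h1 : s f g' g <= sig g.
    apply: le_bigmin => [|i /andP [Gi gi]].
      by rewrite /Lmax; apply: (le_bigmax_cond 0 (fun i => s f i g)); rewrite Gg' gt.
    exact: HG Gg' Gg Gi gt gi.
  have dp : 0 < pos R g - pos R g' by rewrite subr_gt0 /pos ltr_nat.
  have : s f g' g * (pos R g - pos R g') = f g - f g'.
    by rewrite /s /sl divfK // gt_eqF.
  move=> E; nra.
- have e : g = g' by apply: val_inj.
  by rewrite e subrr mulr0 addr0.
Qed.

Lemma ell_affine g k (x : 'I_k -> 'I_n) (lam : 'I_k -> R) (y : 'I_n) :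
  \sum_(i < k) lam i = 1 ->
  pos R y = \sum_(i < k) lam i * pos R (x i) ->
  ell g (pos R y) = \sum_(i < k) lam i * ell g (pos R (x i)).
Proof.
move=> s1 ey; rewrite /ell.
rewrite (eq_bigr (fun i => lam i * (f g - sig g * pos R g) + sig g * (lam i * pos R (x i)))); last by move=> i _; ring.
rewrite big_split /= -mulr_suml -mulr_sumr s1 -ey; ring.
Qed.

Lemma exists_h : exists h : 'I_n -> R, convex_on_range h /\ forall x, G x -> h x = f x.
Proof.
case: (pickP G) => [g0 Gg0|noG]; last first.
  exists (fun _ => 0); split; last by move=> x; rewrite noG.
  move=> k x lam y _ _ _; by rewrite big1 // => i _; rewrite mulr0.
pose h (y : 'I_n) := \big[Order.max/ell g0 (pos R y)]_(g | G g) ell g (pos R y).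
have hge : forall g y, G g -> ell g (pos R y) <= h y.
  by move=> g y Gg; rewrite /h; apply: (le_bigmax_cond _ (fun g' => ell g' (pos R y))).
exists h; split.
- move=> k x lam y l0 s1 ey.
  have key : forall g, G g -> ell g (pos R y) <= \sum_(i<k) lam i * h (x i).
    move=> g Gg; rewrite (ell_affine g s1 ey); apply: ler_sum => i _.
    by apply: ler_wpM2l => //; apply: hge.
  apply: bigmax_le => [|g Gg]; exact: key.
- move=> g Gg; apply/eqP; rewrite eq_le; apply/andP; split.
  + apply: bigmax_le => [|g' Gg']; exact: ell_le.
  + have <- : ell g (pos R g) = f g by rewrite /ell subrr mulr0 addr0.
    exact: hge.
Qed.

End Ext.

Lemma sum_tuple (R : realType) n m (g : 'I_n -> R) :
  \sum_(xs : m.-tuple 'I_n) \prod_(i < m) g (tnth xs i) = (\sum_x g x) ^+ m.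
Proof.
have -> : (\sum_x g x) ^+ m = \prod_(i < m) \sum_x g x by rewrite prodr_const card_ord.
rewrite bigA_distr_bigA /=.
rewrite (reindex (fun f : {ffun 'I_m -> 'I_n} => [tuple f i | i < m])) /=.
  by apply: eq_bigr => F _; apply: eq_bigr => i _; rewrite tnth_mktuple.
exists (fun t : m.-tuple 'I_n => [ffun i => tnth t i]) => [F _|t _].
  by apply/ffunP => i; rewrite ffunE tnth_mktuple.
by apply: eq_from_tnth => i; rewrite tnth_mktuple ffunE.
Qed.

Section Main.
Variables (R : realType) (n K : nat) (f : 'I_n -> R).

Definition okp (a b c : 'I_n * R) : bool :=
  ((a.1 < b.1 < c.1)%N) ==> cv (pos R a.1) a.2 (pos R b.1) b.2 (pos R c.1) c.2.
Definition Q (xs : seq 'I_n) : seq 'I_n := flatten (map (qlist K) xs).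
Definition dec (xs : seq 'I_n) (vals : seq R) : bool := allT okp (zip (Q xs) vals).

Lemma allT_map (T U : Type) (P : U -> U -> U -> bool) (g : T -> U) (l : seq T) :
  allT P (map g l) = allT (fun a b c => P (g a) (g b) (g c)) l.
Proof.
rewrite /allT all_map; apply: eq_all => a /=; rewrite all_map; apply: eq_all => b /=.
by rewrite all_map.
Qed.

Lemma dec_f xs : dec xs (map f (Q xs)) = allT (ok3 f) (Q xs).
Proof. by rewrite /dec -{1}(map_id (Q xs)) zip_map allT_map. Qed.

Lemma conv_ok3 p q r : convex_on_range f -> ok3 f p q r.
Proof.
move=> cf; rewrite /ok3; apply/implyP => /andP [pq qr].
have PQ := ltpos R pq; have QR := ltpos R qr.
set P := pos R p in PQ *; set Q' := pos R q in PQ QR *; set Rr := pos R r in QR *.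
have d0 : 0 < Rr - P by rewrite subr_gt0; exact: lt_trans QR.
pose x := fun i : 'I_2 => if i == ord0 then p else r.
pose lam := fun i : 'I_2 => if i == ord0 then (Rr - Q') / (Rr - P) else (Q' - P) / (Rr - P).
have := cf 2 x lam q.
rewrite !big_ord_recl !big_ord0 /x /lam /= !addr0.
have e1 : (Rr - Q') / (Rr - P) + (Q' - P) / (Rr - P) = 1.
  by rewrite -mulrDl (_ : Rr - Q' + (Q' - P) = Rr - P) ?divff ?gt_eqF //; ring.
have e2 : Q' = (Rr - Q') / (Rr - P) * P + (Q' - P) / (Rr - P) * Rr.
  by field; rewrite gt_eqF.
have l1 : 0 <= (Rr - Q') / (Rr - P) by apply: divr_ge0; lra.
have l2 : 0 <= (Q' - P) / (Rr - P) by apply: divr_ge0; lra.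
move=> /(_ _ e1 e2) h.
have {}h := h (fun i => ltac:(by case: (i == ord0))).
have h' := ler_wpM2r (ltW d0) h.
rewrite mulrDl (mulrAC _ (f p)) (mulrAC _ (f r)) !divfK ?gt_eqF // in h'.
rewrite /cv; nra.
Qed.

Lemma conv_all xs : convex_on_range f -> allT (ok3 f) (Q xs).
Proof.
move=> cf; rewrite /allT; apply/allP => p _; apply/allP => q _; apply/allP => r _.
exact: conv_ok3.
Qed.

Lemma dec_good xs x : allT (ok3 f) (Q xs) -> x \in xs -> good K f x.
Proof.
move=> h xin; rewrite /good /allT.
have inQ : forall p, p \in qlist K x -> p \in Q xs.
  by move=> p pin; apply/flatten_mapP; exists x.
apply/allP => p pin; apply/allP => q qin; apply/allP => r rin.
exact: (allTP h (inQ _ pin) (inQ _ qin) (inQ _ rin)).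
Qed.

Lemma size_Q xs : (size (Q xs) <= size xs * (4 * K + 5))%N.
Proof.
apply: size_flatten_le => x; apply: leq_trans (size_qpts K x).
by rewrite /qlist size_pmap count_size.
Qed.

End Main.

Theorem theorem1p2 (R : realType) :
  exists C : R, 0 < C /\
  forall (n : nat) (eps : R), (2 <= n)%N -> 0 < eps -> eps < 1 ->
  exists T : tester R n,
    valid_coins T /\
    (* O(log n / eps) queries, for every outcome of coins and samples *)
    (forall w xs, (size (queries T w xs))%:R <= C * (trunc_log 2 n)%:R / eps) /\
    (* O(1 / eps) samples *)
    (sample_num T)%:R <= C / eps /\
    forall (D : 'I_n -> R) (f : 'I_n -> R), is_distr D ->
      (convex_on_range f -> accept_prob T D f = 1) /\
      (far_from_convex D eps f -> accept_prob T D f <= 1 / 3).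
Proof.
exists 27; split => // n eps n2 e0 e1.
set K := trunc_log 2 n.
have hK : (n <= 2 ^ K.+1)%N by apply: ltnW; exact: trunc_log_ltn.
have K1 : (1 <= K)%N by rewrite /K trunc_log_gt0.
set m := (Num.truncn (2 / eps)).+1.
have mge : 2 / eps < m%:R by exact: truncnS_gt.
have mle : m%:R <= 3 / eps.
  have t : (Num.truncn (2 / eps))%:R <= 2 / eps by rewrite truncn_le divr_ge0 // ltW.
  have ie : 1 <= 1 / eps by rewrite ler_pdivlMr // mul1r ltW.
  rewrite /m -natr1; apply: le_trans (lerD t ie) _.
  rewrite -mulrDl; apply: ler_wpM2r; first by rewrite invr_ge0 ltW.
  lra.
exists (@Tester R n 'I_1 (fun _ => 1) m (fun _ xs => Q K xs) (fun _ xs vals => dec K xs vals)).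
split; [split => //; by rewrite big_ord1 |].
split.
  move=> w xs /=.
  have A : (size (Q K xs))%:R <= ((m * (9 * K))%N)%:R :> R.
    rewrite ler_nat; apply: leq_trans (size_Q K xs) _; rewrite size_tuple leq_mul2l; apply/orP; right; lia.
  apply: le_trans A _.
  rewrite natrM natrM.
  have -> : 27 * K%:R / eps = (3 / eps) * (9 * K%:R) by ring.
  by apply: ler_wpM2r => //; apply: mulr_ge0.
split.
  rewrite /=; apply: le_trans mle _; apply: ler_wpM2r; first by rewrite invr_ge0 ltW.
  lra.
move=> D f [D0 D1]; split.
  move=> cf; rewrite /accept_prob /= big_ord1 mul1r.
  rewrite (eq_bigr (fun xs : m.-tuple 'I_n => \prod_(i < m) D (tnth xs i))).
    by rewrite sum_tuple D1 expr1n.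
  by move=> xs _; rewrite dec_f conv_all // mulr1.
move=> far.
have HG : forall x y z, good K f x -> good K f y -> good K f z -> (x < y)%N -> (y < z)%N ->
  s f x y <= s f y z.
  by move=> x y z gx gy gz; apply: (triple hK gx gy gz).
have [h [ch hf]] := exists_h HG.
have Fe := far h ch.
pose A := \sum_x (if good K f x then D x else 0).
pose B := \sum_x (if good K f x then 0 else D x).
have AB : A + B = 1.
  by rewrite -D1 /A /B -big_split /=; apply: eq_bigr => x _; case: ifP; rewrite ?addr0 ?add0r.
have FB : \sum_(x < n | f x != h x) D x <= B.
  rewrite big_mkcond /B; apply: ler_sum => x _.
  case gx: (good K f x); first by rewrite hf // eqxx.
  by case: ifP.
have A0 : 0 <= A by apply: sumr_ge0 => x _; case: ifP.
have Ale : A <= 1 - eps by lra.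
have acc : accept_prob (@Tester R n 'I_1 (fun _ => 1) m (fun _ xs => Q K xs) (fun _ xs vals => dec K xs vals)) D f <= A ^+ m.
  rewrite /accept_prob /= big_ord1 mul1r /A -sum_tuple.
  apply: ler_sum => xs _.
  case dx: (dec K xs [seq f i | i <- Q K xs]); last first.
    by rewrite mulr0; apply: prodr_ge0 => i _; case: ifP.
  rewrite mulr1 le_eqVlt; apply/orP; left; apply/eqP/eq_bigr => i _.
  rewrite dec_f in dx; by rewrite (dec_good dx (mem_tnth i xs)).
apply: le_trans acc _.
have p1 : A ^+ m <= (1 - eps) ^+ m by apply: lerXn2r => //; rewrite nnegrE; lra.
have p2 := bern m (ltW e0) (ltW e1).
have p3 : 0 <= (1 - eps) ^+ m by apply: exprn_ge0; lra.
have me : 2 <= m%:R * eps by rewrite -ler_pdivrMr //; exact: ltW.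
apply: le_trans p1 _; nra.
Qed.
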